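(* Let $M$ be a Peano continuum with no cut points. Then: (1) every multivalent exact cut pair of $M$ is inseparable; (2) no cut pair of $M$ is separated by a multivalent exact cut pair, i.e., if $\{\sigma,\tau\}$ is a multivalent exact cut pair and $\{\zeta,\xi\}$ is any cut pair, then $\zeta$ and $\xi$ do not lie in distinct components of $M\setminus\{\sigma,\tau\}$.
   Context: A Peano continuum is a compact, connected, locally connected metrizable space. A cut point is $\eta$ with $M\setminus\{\eta\}$ disconnected. A cut pair is a set of two distinct points, neither a cut point, whose complement is disconnected. For a point $\zeta$ with $M\setminus\{\zeta\}$ connected, its valence is the number of ends of $M\setminus\{\zeta\}$. A cut pair $\{\zeta,\xi\}$ is exact if the valences of $\zeta$ and $\xi$ both equal $n$, where $n$ is the number of components of $M\setminus\{\zeta,\xi\}$; it is multivalent if this common valence is finite and at least $3$. An exact cut pair $\{\zeta,\xi\}$ is inseparable if $\zeta$ and $\xi$ do not lie in distinct components of the complement of any other exact cut pair. *)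

(* Defs.v *)
From HB Require Import structures.
From mathcomp Require Import all_boot all_order all_algebra.
From mathcomp Require Import all_classical all_reals topology.
Set Implicit Arguments. Unset Strict Implicit. Unset Printing Implicit Defensive.
Local Open Scope classical_set_scope.

Section PeanoDefs.
Context {M : topologicalType}.

Definition locally_connected_space : Prop :=
  forall (x : M) (U : set M), nbhs x U ->
    exists V : set M, [/\ open V, V x, connected V & V `<=` U].

(* Peano continuum (metrizability is provided by the ambient metricType) *)
Definition peano_continuum : Prop :=
  [/\ [set: M] !=set0, compact [set: M], connected [set: M] &
      locally_connected_space].

Definition cut_point (z : M) : Prop := ~ connected (~` [set z]).

Definition pair_compl (z x : M) : set M := ~` ([set z] `|` [set x]).

Definition cut_pair (z x : M) : Prop :=
  [/\ z <> x, ~ cut_point z, ~ cut_point x & ~ connected (pair_compl z x)].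

Definition components (A : set M) : set (set M) :=
  [set C | exists2 x, A x & C = connected_component A x].

(* compact subsets of M \ {z}, i.e. compact subsets of M avoiding z *)
Definition admissible (z : M) (K : set M) : Prop := compact K /\ ~ K z.

(* Freudenthal ends of M \ {z}: a choice, for each compact K of M \ {z},
   of a component of (M \ {z}) \ K, decreasing in K.  Off the admissible
   sets the function is normalised to set0, so ends are genuine functions. *)
Definition is_end (z : M) (e : set M -> set M) : Prop :=
  [/\ (forall K, admissible z K -> components (~` (K `|` [set z])) (e K)),
      (forall K L, admissible z K -> admissible z L -> K `<=` L -> e L `<=` e K)
    & (forall K, ~ admissible z K -> e K = set0)].

Definition ends (z : M) : set (set M -> set M) := [set e | is_end z e].

(* exact cut pair: both valences (numbers of ends) equal the number of
   components of M \ {z, x} (as cardinals) *)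
Definition exact_cut_pair (z x : M) : Prop :=
  [/\ cut_pair z x, (ends z #= components (pair_compl z x))%card
    & (ends x #= components (pair_compl z x))%card].

Definition multivalent_exact_cut_pair (z x : M) : Prop :=
  exact_cut_pair z x /\
  exists2 n : nat, (3 <= n)%N & (components (pair_compl z x) #= `I_n)%card.

Definition separates (s t z x : M) : Prop :=
  [/\ pair_compl s t z, pair_compl s t x &
      connected_component (pair_compl s t) z <>
      connected_component (pair_compl s t) x].

Definition inseparable (z x : M) : Prop :=
  exact_cut_pair z x /\
  forall s t : M, exact_cut_pair s t ->
    [set s] `|` [set t] <> [set z] `|` [set x] -> ~ separates s t z x.

End PeanoDefs.

(* Main.v *)
Require Import Defs.
From HB Require Import structures.
From mathcomp Require Import all_boot all_order all_algebra.
From mathcomp Require Import all_classical all_reals topology.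

Local Open Scope classical_set_scope.

Lemma three_comp (T : Type) (A : set (set T)) n : (3 <= n)%N -> (A #= `I_n)%card ->
  forall C1 C2 : set T, exists C, [/\ A C, C <> C1 & C <> C2].
Proof.
move=> n3; rewrite card_eq_le => /andP[_ /card_leP[f]] C1 C2.
have mk : forall k, (k < n)%N -> (`I_n : set nat) k by [].
have i0 : (0 < n)%N by apply: leq_trans n3.
have i1 : (1 < n)%N by apply: leq_trans n3.
have i2 : (2 < n)%N by [].
pose g (k : nat) (hk : (k < n)%N) := \val (f (SigSub (mem_set (mk k hk)))).
have gA : forall k hk, A (g k hk) by move=> k hk; exact: set_valP.
have ginj : forall k l hk hl, g k hk = g l hl -> k = l.
  move=> k l hk hl /val_inj /(@inj _ _ _ f _ _ (mem_set I) (mem_set I)).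
  by move=> /(congr1 val).
have d01 : g 0 i0 <> g 1 i1 by move/ginj.
have d02 : g 0 i0 <> g 2 i2 by move/ginj.
have d12 : g 1 i1 <> g 2 i2 by move/ginj.
have [h0|h0] := pselect (g 0 i0 <> C1 /\ g 0 i0 <> C2).
  by exists (g 0 i0); case: h0.
have [h1|h1] := pselect (g 1 i1 <> C1 /\ g 1 i1 <> C2).
  by exists (g 1 i1); case: h1.
exists (g 2 i2); split => // E.
- apply: h0; split=> E0; apply: h1; split=> E1; congruence.
- apply: h0; split=> E0; apply: h1; split=> E1; congruence.
Qed.

Section Topo.
Context {M : topologicalType}.
Hypothesis lc : @locally_connected_space M.

Lemma cc_open (A : set M) x : open A -> open (connected_component A x).
Proof.
move=> oA; rewrite openE => y Dy.
have Ay : A y by exact: connected_component_sub Dy.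
have [V [oV Vy cV VA]] := @lc y A (open_nbhs_nbhs (conj oA Ay)).
rewrite (same_connected_component Dy).
apply: (@filterS _ _ _ V); last exact: open_nbhs_nbhs.
exact: connected_component_max.
Qed.

Lemma cc_closure (A : set M) x y : open A ->
  closure (connected_component A x) y -> A y -> connected_component A x y.
Proof.
move=> oA cl Ay.
have [w [Dxw Dyw]] := cl _ (open_nbhs_nbhs (conj (@cc_open A y oA)
   (connected_component_refl Ay))).
rewrite (same_connected_component Dxw) -(same_connected_component Dyw).
exact: connected_component_refl.
Qed.

Lemma comp_eq (A : set M) C w : components A C -> C w ->
  C = connected_component A w.
Proof. by move=> [y Ay ->] /same_connected_component. Qed.

End Topo.

Section Gen.
Context {M : topologicalType}.

Lemma conn_between (D B : set M) : connected D -> D `<=` B ->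
  B `<=` closure D -> connected B.
Proof.
move=> cD DB Bcl; apply/connectedP => E [E0 BE sep].
have [] := @connected_subset _ _ _ D sep (ltac:(by rewrite -BE)) cD => DE.
- have [w Ew] := E0 true.
  have Bw : B w by rewrite BE; right.
  have : closure (E false) w := closureS DE (Bcl _ Bw).
  move=> cw; case: sep => S1 _.
  have : (closure (E false) `&` E true) w by [].
  by rewrite S1.
- have [w Ew] := E0 false.
  have Bw : B w by rewrite BE; left.
  have : closure (E true) w := closureS DE (Bcl _ Bw).
  move=> cw; case: sep => _ S2.
  have : (E false `&` closure (E true)) w by [].
  by rewrite S2.
Qed.

Lemma cutp (D : set M) p q : open D -> D !=set0 -> ~ D p ->
  closure D `<=` D `|` [set p] -> ~ D q -> q <> p -> cut_point p.
Proof.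
move=> oD D0 Dp clD Dq qp conn.
have : D = ~` [set p].
  apply: conn => //.
  - exists D => //; apply/seteqP; split => w.
      by move=> Dw; split => // wp; apply: Dp; rewrite -wp.
    by case.
  - exists (closure D); first exact: closed_closure.
    apply/seteqP; split => w.
      by move=> Dw; split; [move=> wp; apply: Dp; rewrite -wp|exact: subset_closure].
    by move=> [np /clD [//|/= wp]].
by move=> E; apply: Dq; rewrite E.
Qed.

End Gen.

Section Main.
Context {M : topologicalType}.
Hypothesis lc : @locally_connected_space M.
Hypothesis nocut : forall z : M, ~ cut_point z.
Hypothesis cl1 : forall x : M, closed [set x].

Lemma pc_open (a b : M) : open (pair_compl a b).
Proof. by apply: closed_openC; apply: closedU. Qed.

Lemma pc_sym (a b : M) : pair_compl a b = pair_compl b a.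
Proof. by rewrite /pair_compl setUC. Qed.

Lemma comp_closure_l {a b : M} {C} : a <> b -> components (pair_compl a b) C ->
  closure C a.
Proof.
move=> ab [y Ay CE]; apply: contrapT => nca.
apply: (nocut b).
have Cy : C y by rewrite CE; exact: connected_component_refl.
have CA : C `<=` pair_compl a b by rewrite CE; exact: connected_component_sub.
apply: (@cutp _ C b a).
- by rewrite CE; apply: cc_open => //; exact: pc_open.
- by exists y.
- by move=> /CA; apply; right.
- move=> w clw.
  have [Aw|nAw] := pselect (pair_compl a b w).
    by left; rewrite CE; apply: (@cc_closure _ lc _ _ _ (pc_open _ _)) => //; rewrite -CE.
  move: nAw; rewrite /pair_compl => /contrapT [/= wa|/= wb].
    by exfalso; apply: nca; rewrite -wa.
  by right.
- by move=> /CA; apply; left.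
- exact: ab.
Qed.

Lemma comp_closure {a b : M} {C} : a <> b -> components (pair_compl a b) C ->
  closure C a /\ closure C b.
Proof.
move=> ab cC; split; first exact: comp_closure_l cC.
apply: (@comp_closure_l b a C) => //; first by move=> e; apply: ab.
by rewrite pc_sym.
Qed.

Lemma K_conn {a b : M} {C} : a <> b -> components (pair_compl a b) C ->
  connected (C `|` ([set a] `|` [set b])).
Proof.
move=> ab cC; have [ca cb] := comp_closure ab cC.
have [y _ CE] := cC.
apply: (@conn_between _ C); first by rewrite CE; exact: component_connected.
  by move=> w Cw; left.
move=> w [Cw|[/= ->|/= ->]] //; exact: subset_closure.
Qed.

Lemma part1 (a b s t : M) C : a <> b -> components (pair_compl a b) C ->
  ~ C s -> ~ C t -> ~ separates s t a b.
Proof.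
move=> ab cC Cs Ct [Pa Pb Neq]; apply: Neq.
have [y Ay CE] := cC.
have CA : C `<=` pair_compl a b by rewrite CE; exact: connected_component_sub.
have KS : C `|` ([set a] `|` [set b]) `<=` pair_compl s t.
  move=> w [Cw|[/= ->|/= ->]] //.
  by move=> [/= ws|/= wt]; [apply: Cs|apply: Ct]; rewrite -?ws -?wt.
have := connected_component_max (x := a) (or_intror (or_introl erefl)) KS
  (K_conn ab cC).
move=> /(_ b (or_intror (or_intror erefl))).
exact: same_connected_component.
Qed.

Lemma part2 (a b z x : M) C : a <> b -> components (pair_compl a b) C ->
  ~ C z -> ~ C x -> separates a b z x -> connected (pair_compl z x).
Proof.
move=> ab cC Cz Cx [Az Ax Neq].
set A := pair_compl a b; set S := pair_compl z x.
set K := C `|` ([set a] `|` [set b]).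
have [y0 Ay0 CE] := cC.
have CA : C `<=` A by rewrite CE; exact: connected_component_sub.
have Sa : S a.
  by move=> [/= az|/= ax]; [apply: Az; left; rewrite /= az|apply: Ax; left; rewrite /= ax].
have Sb : S b.
  by move=> [/= bz|/= bx]; [apply: Az; right; rewrite /= bz|apply: Ax; right; rewrite /= bx].
have KS : K `<=` S.
  move=> w [Cw|[/= ->|/= ->]] //.
  by move=> [/= wz|/= wx]; [apply: Cz|apply: Cx]; rewrite -?wz -?wx.
have cK : connected K := K_conn ab cC.
set W := A `&` S.
have oW : open W := openI (pc_open a b) (pc_open z x).
have DW : forall y, connected_component W y `<=` W.
  by move=> y; exact: connected_component_sub.
have cc_in : forall y, W y ->
    connected_component W y `<=` connected_component A y.
  move=> y Wy; apply: connected_component_max.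
  - exact: connected_component_refl.
  - by move=> w /DW [].
  - exact: component_connected.
have key : forall y, W y -> forall p, A p ->
    closure (connected_component W y) p ->
    connected_component A p = connected_component A y.
  move=> y Wy p Ap clp.
  have [w [Dw Pw]] := clp _ (open_nbhs_nbhs (conj (@cc_open M lc A p (pc_open a b))
     (connected_component_refl Ap))).
  have Ayw := cc_in y Wy w Dw.
  by rewrite (same_connected_component Pw) (same_connected_component Ayw).
have meet : forall y, W y ->
    closure (connected_component W y) `&` ([set a] `|` [set b]) !=set0.
  move=> y Wy; apply: contrapT => nm.
  set D := connected_component W y.
  have oD : open D := @cc_open M lc W y oW.
  have D0 : D !=set0 by exists y; exact: connected_component_refl.
  have clD : closure D `<=` D `|` ([set z] `|` [set x]).
    move=> w clw; have [Ww|nWw] := pselect (W w).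
      by left; exact: (@cc_closure M lc W y w oW).
    have [Aw|nAw] := pselect (A w).
      have nSw : ~ S w by move=> Sw; apply: nWw.
      by right; apply: contrapT.
    by exfalso; apply: nm; exists w; split => //; apply: contrapT.
  have nDa : ~ D a by move=> /DW [/= + _]; apply; left.
  have nDz : ~ D z by move=> /DW [_ /=]; apply; left.
  have nDx : ~ D x by move=> /DW [_ /=]; apply; right.
  have xa : a <> x by move=> e; apply: Ax; left; rewrite /= e.
  have za : a <> z by move=> e; apply: Az; left; rewrite /= e.
  have [clz|nclz] := pselect (closure D z); last first.
    apply: (nocut x); apply: (@cutp _ D x a) => //.
    move=> w clw; case: (clD w clw) => [|[/= wz|/= wx]]; [by left| |by right].
    by exfalso; apply: nclz; rewrite -wz.
  have [clx|nclx] := pselect (closure D x); last first.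
    apply: (nocut z); apply: (@cutp _ D z a) => //.
    move=> w clw; case: (clD w clw) => [|[/= wz|/= wx]]; [by left|by right|].
    by exfalso; apply: nclx; rewrite -wx.
  by apply: Neq; rewrite (key y Wy z Az clz) (key y Wy x Ax clx).
have SE : S = \bigcup_(y in S) (K `|` (connected_component W y `|`
    (closure (connected_component W y) `&` ([set a] `|` [set b])))).
  apply/seteqP; split => w.
    move=> Sw; exists w => //.
    have [Ww|nWw] := pselect (W w).
      by right; left; exact: connected_component_refl.
    have nAw : ~ A w by move=> Aw; apply: nWw.
    by left; right; apply: contrapT.
  move=> [y Sy [Kw|[Dw|[_ [/= ->|/= ->]]]]] //; first exact: KS.
  by have [] := DW y w Dw.
rewrite SE; apply: bigcup_connected.
  by exists a => y _; left; right; left.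
move=> y Sy; have [Wy|nWy] := pselect (W y); last first.
  by rewrite connected_component_out // closure0 set0I !setU0.
have [w [clw abw]] := meet y Wy.
apply: connectedU => //.
  by exists w; split; [rewrite /K; right|right; split].
apply: (@conn_between _ (connected_component W y)).
- exact: component_connected.
- by move=> v Dv; left.
- move=> v [Dv|[clv _]] //; exact: subset_closure.
Qed.

End Main.

Theorem lemma2p6 (R : realType) (M : metricType R) :
  @peano_continuum M -> (forall z : M, ~ cut_point z) ->
  (forall z x : M, multivalent_exact_cut_pair z x -> inseparable z x) /\
  (forall s t z x : M, multivalent_exact_cut_pair s t -> cut_pair z x ->
     ~ separates s t z x).
Proof.
move=> [_ _ _ lc] nocut.
have cl1 : forall x : M, closed [set x].
  move=> x; exact: (accessible_closed_set1 (hausdorff_accessible (@metric_hausdorff R M))).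
split.
- move=> z x [[cp e1 e2] [n n3 card]]; split; first by split.
  move=> s t _ _; have [zx _ _ _] := cp.
  have [C [cC Cs Ct]] := @three_comp _ _ _ n3 card
    (connected_component (pair_compl z x) s) (connected_component (pair_compl z x) t).
  apply: (@part1 _ lc nocut cl1 _ _ s t C zx cC).
    by move=> Cs'; apply: Cs; exact: (@comp_eq _ _ _ _ cC Cs').
  by move=> Ct'; apply: Ct; exact: (@comp_eq _ _ _ _ cC Ct').
- move=> s t z x [[[st _ _ _] _ _] [n n3 card]] [_ _ _ ncon] sep; apply: ncon.
  have [C [cC Cz Cx]] := @three_comp _ _ _ n3 card
    (connected_component (pair_compl s t) z) (connected_component (pair_compl s t) x).
  apply: (@part2 _ lc nocut cl1 _ _ z x C st cC _ _ sep).
    by move=> Cz'; apply: Cz; exact: (@comp_eq _ _ _ _ cC Cz').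
  by move=> Cx'; apply: Cx; exact: (@comp_eq _ _ _ _ cC Cx').
Qed.
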